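(* Let $1\le r\le s\le t$ and let $u=ABCd$, $v=A'B'C'd'$ be vertices of $E3C(r,s,t)$ with $A=A'$, $B\ne B'$, $C=C'$ and $d\ne d'$. Then there exist $2r+2$ pairwise internally disjoint $u$–$v$ paths in $E3C(r,s,t)$, each of length at most $s+6$ if $\{d,d'\}=\{0,1\}$ or $\{d,d'\}=\{1,2\}$, and each of length at most $s+8$ if $\{d,d'\}=\{0,2\}$.
   Context: The exchanged 3-ary $n$-cube $E3C(r,s,t)$ ($r,s,t\ge1$, $n=r+s+t+1$): vertices are strings written $x=ABCd$ with $A\in\{0,1,2\}^r$, $B\in\{0,1,2\}^s$, $C\in\{0,1,2\}^t$, $d\in\{0,1,2\}$. Two distinct vertices $x=ABCd$, $y=A'B'C'd'$ are adjacent iff one of: (E0) $A=A',B=B',C=C'$ and $d\ne d'$; (E1) $d=d'=0$, $A=A'$, $B=B'$ and $C,C'$ differ in exactly one position; (E2) $d=d'=1$, $A=A'$, $C=C'$ and $B,B'$ differ in exactly one position; (E3) $d=d'=2$, $B=B'$, $C=C'$ and $A,A'$ differ in exactly one position. Paths are internally disjoint if they share no vertices other than their endpoints; length = number of edges. *)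

(* Defs.v *)
From mathcomp Require Import all_boot.
Set Implicit Arguments. Unset Strict Implicit. Unset Printing Implicit Defensive.

Definition word (n : nat) := {ffun 'I_n -> 'I_3}.

Definition hdist n (x y : word n) : nat := #|[set i | x i != y i]|.

Definition e3c_vertex (r s t : nat) : finType :=
  (word r * word s * word t * 'I_3)%type.

Definition vA r s t (x : e3c_vertex r s t) : word r := x.1.1.1.
Definition vB r s t (x : e3c_vertex r s t) : word s := x.1.1.2.
Definition vC r s t (x : e3c_vertex r s t) : word t := x.1.2.
Definition vd r s t (x : e3c_vertex r s t) : 'I_3 := x.2.

Definition e3c_adj r s t (x y : e3c_vertex r s t) : bool :=
  (x != y) &&
  [|| [&& vA x == vA y, vB x == vB y, vC x == vC y & vd x != vd y],
      [&& vd x == 0 :> nat, vd y == 0 :> nat, vA x == vA y, vB x == vB y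
        & hdist (vC x) (vC y) == 1],
      [&& vd x == 1 :> nat, vd y == 1 :> nat, vA x == vA y, vC x == vC y
        & hdist (vB x) (vB y) == 1]
    | [&& vd x == 2 :> nat, vd y == 2 :> nat, vB x == vB y, vC x == vC y
        & hdist (vA x) (vA y) == 1]].

(* A u-v path is represented by its list q of internal vertices; the full
   vertex sequence is u :: rcons q v. *)
Definition is_uv_path r s t (u v : e3c_vertex r s t) (q : seq (e3c_vertex r s t)) : bool :=
  path (@e3c_adj r s t) u (rcons q v) && uniq (u :: rcons q v).

Definition path_length T (q : seq T) : nat := (size q).+1.

(* Main.v *)
Require Import Defs.
From mathcomp Require Import all_boot zify.
Set Implicit Arguments. Unset Strict Implicit. Unset Printing Implicit Defensive.


Definition l0 : 'I_3 := @Ordinal 3 0 isT.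
Definition l1 : 'I_3 := @Ordinal 3 1 isT.
Definition l2 : 'I_3 := @Ordinal 3 2 isT.
Definition shift (x : 'I_3) (b : bool) : 'I_3 :=
  match val x, b with 0, false => l1 | 0, true => l2 | 1, false => l2 | 1, true => l0
  | _, false => l0 | _, true => l1 end.
Lemma shift_neq x b : shift x b != x.
Proof. by case: x => [[|[|[|m]]] Hm] //; case: b. Qed.
Lemma shift_inj x b b' : shift x b = shift x b' -> b = b'.
Proof. by case: x => [[|[|[|m]]] Hm] //; case: b; case: b'. Qed.

Section Words.
Variable n : nat.
Implicit Types X Y Z W : word n.

Lemma hdistC X Y : hdist X Y = hdist Y X.
Proof. by rewrite /hdist; apply: eq_card => i; rewrite !inE eq_sym. Qed.

Lemma hdist0 X Y : (hdist X Y == 0) = (X == Y).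
Proof.
rewrite /hdist cards_eq0; apply/eqP/eqP => [H|->]; last first.
  by apply/setP => i; rewrite !inE eqxx.
apply/ffunP => i; apply/eqP; move/setP: H => /(_ i); rewrite !inE; by move/negbFE.
Qed.

Lemma hdistxx X : hdist X X = 0.
Proof. by apply/eqP; rewrite hdist0. Qed.

Lemma hdist1_neq X Y : hdist X Y = 1 -> X != Y.
Proof. by move=> H; rewrite -hdist0 H. Qed.

Lemma hdist_le X Y : hdist X Y <= n.
Proof. by rewrite /hdist; apply: leq_trans (max_card _) _; rewrite card_ord. Qed.

Definition upd X (i : 'I_n) (y : 'I_3) : word n := [ffun j => if j == i then y else X j].

Lemma hdist_upd1 X i y : X i != y -> hdist X (upd X i y) = 1.
Proof.
move=> Hi; rewrite /hdist (_ : [set _ | _] = [set i]) ?cards1 //.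
apply/setP => j; rewrite !inE ffunE; case: (j =P i) => [->|ne] //.
by rewrite eqxx.
Qed.

Lemma hdist_updY X Y i : X i != Y i -> hdist X Y = (hdist (upd X i (Y i)) Y).+1.
Proof.
move=> Hi; rewrite /hdist (cardsD1 i) inE Hi add1n; congr _.+1.
apply: eq_card => j; rewrite !inE ffunE; case: (j =P i) => [->|ne]; first by rewrite eqxx.
by rewrite andTb.
Qed.

Lemma hdist_add X Z W : (forall j, Z j = X j \/ Z j = W j) ->
  hdist X W = hdist X Z + hdist Z W.
Proof.
move=> H; rewrite /hdist -cardsUI.
rewrite (_ : _ :&: _ = set0) ?cards0 ?addn0; last first.
  apply/setP => j; rewrite !inE; by case: (H j) => ->; rewrite eqxx ?andbF.
apply: eq_card => j; rewrite !inE; case: (H j) => ->; by rewrite eqxx ?orbF.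
Qed.

Fixpoint walkn k X Y : seq (word n) :=
  if k is k'.+1 then
    if [pick i | X i != Y i] is Some i then upd X i (Y i) :: walkn k' (upd X i (Y i)) Y
    else [::]
  else [::].
Definition walk X Y := walkn (hdist X Y) X Y.

Lemma walkn_cons k X Y : hdist X Y = k.+1 -> exists i, [/\ X i != Y i,
  hdist (upd X i (Y i)) Y = k &
  walkn k.+1 X Y = upd X i (Y i) :: walkn k (upd X i (Y i)) Y].
Proof.
move=> H /=; case: pickP => [i Hi|H0].
  by exists i; split => //; move: H; rewrite (hdist_updY Hi) => -[].
have : X == Y by apply/eqP/ffunP => i; apply/eqP; move/negbT: (H0 i); rewrite negbK.
by rewrite -hdist0 H.
Qed.

Definition hrel := fun a b : word n => hdist a b == 1.

Lemma walkn_spec k X Y : hdist X Y = k ->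
  [/\ path hrel X (walkn k X Y), last X (walkn k X Y) = Y, size (walkn k X Y) = k,
      (forall W, W \in walkn k X Y -> hdist W Y < k) &
      (forall W, W \in walkn k X Y -> forall j, W j = X j \/ W j = Y j)].
Proof.
elim: k X => [|k IH] X H.
  by split => //=; apply/eqP; rewrite -hdist0 H.
have [i [Hi H1 ->]] := walkn_cons H.
have [IP IL IS ID IB] := IH _ H1.
split => /=.
- by rewrite IP andbT /hrel hdist_upd1.
- exact: IL.
- by rewrite IS.
- move=> W; rewrite inE => /orP [/eqP ->|/ID]; first by rewrite H1.
  by move/leqW.
- move=> W; rewrite inE => /orP [/eqP -> j|/IB HW j].
    by rewrite ffunE; case: (j =P i) => [->|]; [right|left].
  case: (HW j) => ->; last by right.
  by rewrite ffunE; case: (j =P i) => [->|]; [right|left].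
Qed.

Lemma walk_path X Y : path hrel X (walk X Y).
Proof. by have [] := walkn_spec (erefl (hdist X Y)). Qed.
Lemma walk_last X Y : last X (walk X Y) = Y.
Proof. by have [] := walkn_spec (erefl (hdist X Y)). Qed.
Lemma walk_size X Y : size (walk X Y) = hdist X Y.
Proof. by have [] := walkn_spec (erefl (hdist X Y)). Qed.

Lemma walkn_uniq k X Y : hdist X Y = k -> uniq (X :: walkn k X Y).
Proof.
elim: k X => [|k IH] X H //.
have [i [Hi H1 ->]] := walkn_cons H.
have [_ _ _ ID _] := walkn_spec H1.
rewrite cons_uniq (IH _ H1) andbT inE negb_or.
apply/andP; split.
  by apply/negP => /eqP E; move: (hdist_upd1 Hi); rewrite -E hdistxx.
by apply/negP => /ID; rewrite H ltnNge leqnSn.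
Qed.
Lemma walk_uniq X Y : uniq (X :: walk X Y).
Proof. exact: walkn_uniq. Qed.

Lemma walkn_one k X Y W W' : hdist X Y = k -> W \in walkn k X Y -> W' \in walkn k X Y ->
  hdist X W = 1 -> hdist X W' = 1 -> W = W'.
Proof.
case: k => [|k] H //.
have [i [Hi H1 ->]] := walkn_cons H.
have [_ _ _ ID IB] := walkn_spec H1.
have big : forall Z, Z \in walkn k (upd X i (Y i)) Y -> hdist X Z = 1 -> False.
  move=> Z HZ HXZ.
  have E : hdist X Z = hdist X (upd X i (Y i)) + hdist (upd X i (Y i)) Z.
    apply: hdist_add => j; rewrite ffunE; case: (j =P i) => [->|]; last by left.
    by right; case: (IB _ HZ i) => ->; rewrite // ffunE eqxx.
  rewrite hdist_upd1 // HXZ in E.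
  have : hdist (upd X i (Y i)) Z == 0 by rewrite -(eqn_add2l 1) -E.
  rewrite hdist0 => /eqP EZ.
  by move: (ID _ HZ); rewrite -EZ H1 ltnn.
rewrite !inE => /orP [/eqP ->|/big HW] /orP [/eqP ->|/big HW'] // HXW HXW'.
all: by [case: (HW' HXW') | case: (HW HXW)].
Qed.

Lemma walk_one X Y W W' : W \in walk X Y -> W' \in walk X Y ->
  hdist X W = 1 -> hdist X W' = 1 -> W = W'.
Proof. exact: walkn_one. Qed.

Lemma walk_mem_last X Y : X != Y -> Y \in walk X Y.
Proof.
move=> H; have := mem_last X (walk X Y); rewrite walk_last inE eq_sym (negbTE H) //.
Qed.

Definition var X (j : nat) : word n :=
  [ffun p : 'I_n => if val p == j./2 then shift (X p) (odd j) else X p].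

Lemma var_upd X j (H : j./2 < n) : var X j = upd X (Ordinal H) (shift (X (Ordinal H)) (odd j)).
Proof.
apply/ffunP => p; rewrite !ffunE; case: (p =P Ordinal H) => [->|ne]; first by rewrite eqxx.
case: eqP => // E; case: ne; exact: val_inj.
Qed.

Lemma var_hdist X j : j./2 < n -> hdist X (var X j) = 1.
Proof. move=> H; rewrite (var_upd _ H) hdist_upd1 // eq_sym; exact: shift_neq. Qed.

Lemma var_neq X j : j./2 < n -> var X j != X.
Proof. by move=> H; rewrite eq_sym; apply: hdist1_neq; apply: var_hdist. Qed.

Lemma var_inj X j j' : j./2 < n -> j'./2 < n -> var X j = var X j' -> j = j'.
Proof.
move=> H H' E.
have := congr1 (fun f : word n => f (Ordinal H)) E; rewrite !ffunE /= eqxx.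
case: eqP => [E2|_]; last by move=> E3; move: (shift_neq (X (Ordinal H)) (odd j)); rewrite E3 eqxx.
move/shift_inj => Eo.
by rewrite -[j]odd_double_half -[j']odd_double_half Eo E2.
Qed.

End Words.


Section Vert.
Variables r s t : nat.
Notation vert := (e3c_vertex r s t).
Definition V (A : word r) (B : word s) (C : word t) (d : 'I_3) : vert := (A, B, C, d).

Lemma V_eq A B C d A' B' C' d' :
  (V A B C d == V A' B' C' d') = [&& A == A', B == B', C == C' & d == d'].
Proof. by rewrite /V !xpair_eqE !andbA. Qed.

Lemma adjE0 A B C d d' : d != d' -> e3c_adj (V A B C d) (V A B C d').
Proof. by move=> H; rewrite /e3c_adj V_eq /= !eqxx H. Qed.

Lemma adjL0 A B C C' : hdist C C' = 1 -> e3c_adj (V A B C l0) (V A B C' l0).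
Proof. by move=> H; rewrite /e3c_adj V_eq /= !eqxx (negbTE (hdist1_neq H)) H. Qed.
Lemma adjL1 A B B' C : hdist B B' = 1 -> e3c_adj (V A B C l1) (V A B' C l1).
Proof. by move=> H; rewrite /e3c_adj V_eq /= !eqxx (negbTE (hdist1_neq H)) H !orbT. Qed.
Lemma adjL2 A A' B C : hdist A A' = 1 -> e3c_adj (V A B C l2) (V A' B C l2).
Proof. by move=> H; rewrite /e3c_adj V_eq /= !eqxx (negbTE (hdist1_neq H)) H !orbT. Qed.

Lemma adjC (x y : vert) : e3c_adj x y = e3c_adj y x.
Proof.
rewrite /e3c_adj eq_sym (eq_sym (vA y)) (eq_sym (vB y)) (eq_sym (vC y)) (eq_sym (vd y)).
rewrite (hdistC (vC y)) (hdistC (vB y)) (hdistC (vA y)).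
by case: (vd x == 0 :> nat); case: (vd y == 0 :> nat); case: (vd x == 1 :> nat);
  case: (vd y == 1 :> nat); case: (vd x == 2 :> nat); case: (vd y == 2 :> nat).
Qed.


Lemma mem_mapB A B C d A' C' d' (q : seq (word s)) :
  (V A B C d \in map (fun W => V A' W C' d') q) = [&& A == A', B \in q, C == C' & d == d'].
Proof.
apply/mapP/and4P => [[W HW]|[/eqP-> HB /eqP-> /eqP->]]; last by exists B.
by move/eqP; rewrite V_eq => /and4P[/eqP-> /eqP-> /eqP-> /eqP->]; split.
Qed.

Lemma seg_path (T : Type) (f : T -> vert) (R : rel T) W0 q rest :
  (forall a b, R a b -> e3c_adj (f a) (f b)) -> path R W0 q ->
  path (@e3c_adj r s t) (f (last W0 q)) rest ->
  path (@e3c_adj r s t) (f W0) (map f q ++ rest).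
Proof.
move=> Hf Hq Hr; rewrite cat_path last_map Hr andbT path_map.
by apply: sub_path Hq => a b /Hf.
Qed.

Lemma hrel_adj A C : forall a b : word s, hrel a b -> e3c_adj (V A a C l1) (V A b C l1).
Proof. by move=> a b /eqP; apply: adjL1. Qed.

Definition good (u v : vert) (bnd : nat) :=
  exists P : 'I_(2 * r + 2) -> seq vert,
    (forall i, is_uv_path u v (P i)) /\
    injective P /\
    (forall i j, i <> j -> forall x, x \in P i -> x \notin P j) /\
    (forall i, path_length (P i) <= bnd).

Lemma assemble (u v : vert) bnd (P : 'I_(2 * r + 2) -> seq vert) (cls : vert -> nat) :
  (forall i, is_uv_path u v (P i)) -> (forall i, P i != [::]) ->
  (forall i x, x \in P i -> cls x = i) -> (forall i, path_length (P i) <= bnd) ->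
  good u v bnd.
Proof.
move=> H1 H2 H3 H4; exists P; split => //; split; last split => //.
  move=> i j E; move: (H2 i); case E1: (P i) => [|x q] // _.
  have Hx : x \in P j by rewrite -E E1 inE eqxx.
  have Hx' : x \in P i by rewrite E1 inE eqxx.
  by apply: ord_inj; rewrite -(H3 _ _ Hx) -(H3 _ _ Hx').
move=> i j ne x Hi; apply/negP => Hj; apply: ne; apply: ord_inj.
by rewrite -(H3 _ _ Hi) -(H3 _ _ Hj).
Qed.

Lemma good_rev (u v : vert) bnd : good u v bnd -> good v u bnd.
Proof.
move=> [P [H1 [H2 [H3 H4]]]]; exists (fun i => rev (P i)); split; last split; last split.
- move=> i; move: (H1 i); rewrite /is_uv_path => /andP[Hp Hu].
  apply/andP; split.
    have := rev_path (@e3c_adj r s t) u (rcons (P i) v).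
    rewrite last_rcons belast_rcons rev_cons; move=> ->; apply: (sub_path _ Hp).
    by move=> a b; rewrite adjC.
  by move: Hu; rewrite -rev_uniq rev_cons rev_rcons.
- by move=> i j /(congr1 rev); rewrite !revK => /H2.
- by move=> i j ne x; rewrite !mem_rev; apply: H3.
- by move=> i; move: (H4 i); rewrite /path_length size_rev.
Qed.

End Vert.


Lemma l01 : (l0 == l1) = false. Proof. by []. Qed.
Lemma l02 : (l0 == l2) = false. Proof. by []. Qed.
Lemma l10 : (l1 == l0) = false. Proof. by []. Qed.
Lemma l12 : (l1 == l2) = false. Proof. by []. Qed.
Lemma l20 : (l2 == l0) = false. Proof. by []. Qed.
Lemma l21 : (l2 == l1) = false. Proof. by []. Qed.

Lemma walk_nstart n (X Y : word n) : (X \in walk X Y) = false.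
Proof. by have := walk_uniq X Y; rewrite cons_uniq => /andP[/negbTE]. Qed.

Lemma pick_idx (T : eqType) m (f : nat -> T) x j :
  (forall a b, a < m -> b < m -> f a = f b -> a = b) -> j < m -> x = f j ->
  (if [pick k : 'I_m | f k == x] is Some k then (val k).+2 else 0) = j.+2.
Proof.
move=> Hinj Hj ->; case: pickP => [k /eqP Hk|H]; first by congr _.+2; exact: Hinj _ _ (ltn_ord k) Hj Hk.
by move: (H (Ordinal Hj)); rewrite /= eqxx.
Qed.

Lemma walk_uniq' n (X Y : word n) : uniq (walk X Y).
Proof. by have := walk_uniq X Y; rewrite cons_uniq => /andP[]. Qed.

Lemma ar1 k s : k <= s -> k < s + 6. Proof. lia. Qed.
Lemma ar2 k s : k <= s -> 3 + (k + 2) < s + 6. Proof. lia. Qed.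
Lemma ar3 k s c : k <= s -> c <= 1 -> 2 + (k + (2 + c)) < s + 6. Proof. lia. Qed.

Ltac usimp := rewrite ?(cat_uniq, mem_cat, in_cons, in_nil, mem_mapB, V_eq, eqxx, l01, l02, l10, l12, l20, l21, walk_nstart) /=.

Ltac ufin := rewrite ?walk_uniq' /= ?andbF ?andbT ?orbF ?orFb ?andFb ?andTb ?orbT /=; done.

Ltac adj := match goal with
 | |- is_true (e3c_adj (V ?A ?B ?C ?d) (V ?A ?B ?C ?d')) => by apply: adjE0
 | |- is_true (e3c_adj (V ?A ?B ?C l0) (V ?A ?B ?C' l0)) => by apply: adjL0
 | |- is_true (e3c_adj (V ?A ?B ?C l1) (V ?A ?B' ?C l1)) => by apply: adjL1
 | |- is_true (e3c_adj (V ?A ?B ?C l2) (V ?A' ?B ?C l2)) => by apply: adjL2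
 end.
Ltac steps := repeat (apply/andP; split; [adj|]).

Section C01.
Variables r s t : nat.
Hypotheses (hr : 1 <= r) (hrs : r <= s) (hst : s <= t).


Lemma case01 (A : word r) (B B' : word s) (C : word t) : B != B' ->
  good (V A B C l0) (V A B' C l1) (s + 6).
Proof.
move=> nBB.
have hj : forall j, j < 2 * r -> j./2 < r by move=> j; rewrite ltn_half_double -mul2n.
have hjs : forall j, j < 2 * r -> j./2 < s by move=> j /hj H; apply: leq_trans H hrs.
have hjt : forall j, j < 2 * r -> j./2 < t by move=> j /hjs H; apply: leq_trans H hst.
set q2 := walk B' B.
set beta := fun j => if var B' j \in q2 then B' else var B' j.
set ax := var A 0.
set cv := fun j => var C j.
have hax : hdist A ax = 1 by apply: var_hdist.
have hax' : hdist ax A = 1 by rewrite hdistC.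
have hcv : forall j, j < 2 * r -> hdist C (cv j) = 1 by move=> j /hjt; apply: var_hdist.
have hcvinj : forall a b, a < 2 * r -> b < 2 * r -> cv a = cv b -> a = b.
  by move=> a b /hjt Ha /hjt Hb; apply: var_inj.
have hBq2 : B \in q2 by apply: walk_mem_last; rewrite eq_sym.
have hbB : forall j, (beta j == B) = false.
  move=> j; rewrite /beta; case: ifP => H; first by rewrite eq_sym (negbTE nBB).
  by apply/negbTE; apply/negP => /eqP E; rewrite E hBq2 in H.
have hbeta : forall j, j < 2 * r -> beta j = B' \/ (beta j \notin q2 /\ hdist (beta j) B' = 1).
  move=> j Hj; rewrite /beta; case: ifP => H; [by left | right].
  by rewrite H hdistC var_hdist //; apply: hjs.
have hbinj : forall a b, a < 2 * r -> b < 2 * r -> beta a = beta b -> a = b.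
  move=> a b Ha Hb; rewrite /beta.
  have Hva := var_neq B' (hjs _ Ha); have Hvb := var_neq B' (hjs _ Hb).
  case: ifP => Ia; case: ifP => Ib.
  - move=> _; apply: (var_inj (hjs _ Ha) (hjs _ Hb)).
    by apply: (walk_one Ia Ib); apply: var_hdist; apply: hjs.
  - by move=> E; move: Hvb; rewrite -E eqxx.
  - by move=> E; move: Hva; rewrite E eqxx.
  - by apply: var_inj; apply: hjs.
have hAax : (A == ax) = false by apply/negbTE; rewrite eq_sym; apply: var_neq.
have haxA : (ax == A) = false by rewrite eq_sym.
have hcvC : forall j, j < 2 * r -> (cv j == C) = false.
  by move=> j Hj; apply/negbTE; apply: var_neq; apply: hjt.
have hq2last : last B' q2 = B by exact: walk_last.
have hq2path : path (@hrel s) B' q2 by exact: walk_path.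
have hq2uniq : uniq (B' :: q2) by exact: walk_uniq.
have hq2size : size q2 = hdist B' B by exact: walk_size.
clearbody q2 beta ax cv.
pose Pa := map (fun W => V A W C l1) (rev q2).
pose Pb := [:: V A B C l2; V ax B C l2; V ax B C l1] ++
  map (fun W => V ax W C l1) (walk B B') ++ [:: V ax B' C l2; V A B' C l2].
pose Pm j := [:: V A B (cv j) l0; V A B (cv j) l1] ++
  map (fun W => V A W (cv j) l1) (walk B (beta j)) ++
  [:: V A (beta j) (cv j) l0; V A (beta j) C l0] ++
  (if beta j == B' then [::] else [:: V A (beta j) C l1]).
pose P (i : 'I_(2 * r + 2)) := if val i == 0 then Pa else if val i == 1 then Pb else Pm (val i - 2).
pose cls (x : e3c_vertex r s t) :=
  if (vd x == l2) || (vA x != A) then 1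
  else if vC x != C then
    (if [pick k : 'I_(2 * r) | cv k == vC x] is Some k then (val k).+2 else 0)
  else if (vd x == l1) && (vB x \in q2) then 0
  else (if [pick k : 'I_(2 * r) | beta k == vB x] is Some k then (val k).+2 else 0).
have finj : forall A0 C0 d0, injective (fun W : word s => @V r s t A0 W C0 d0).
  by move=> A0 C0 d0 a b /eqP; rewrite V_eq => /and4P[_ /eqP].
have hBB : (B == B') = false by apply/negbTE.
have hB'B : (B' == B) = false by rewrite eq_sym.
apply: (@assemble _ _ _ _ _ _ P cls).
- move=> [[|[|j]] Hj]; rewrite /P /=.
  + rewrite /is_uv_path /Pa -map_rcons -rev_cons; apply/andP; split; last first.
      rewrite cons_uniq mem_mapB l01 !andbF /= (map_inj_uniq (finj _ _ _)) rev_uniq.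
      exact: hq2uniq.
    rewrite (lastI B' q2) rev_rcons hq2last /= adjE0 //=.
    rewrite (@path_map _ _ (fun W => V A W C l1)) -{1}hq2last rev_path.
    by apply: sub_path hq2path => a b /(hrel_adj A C) H /=; rewrite adjC.
  + rewrite /is_uv_path /Pb rcons_cat /=; apply/andP; split.
      steps; rewrite rcons_cat; apply: (seg_path (f := fun W => V ax W C l1)).
      * exact: hrel_adj.
      * exact: walk_path.
      * by rewrite walk_last /=; steps.
    rewrite /= !rcons_cat /=.
    do 3 (usimp; rewrite ?hAax ?haxA ?hBB ?hB'B ?(map_inj_uniq (finj _ _ _))).
    ufin.
  + have Hj' : j < 2 * r by move: Hj; rewrite addn2 !ltnS.
    rewrite ?subSS ?subn0.
    have h1 := hcv _ Hj'. have h1' : hdist (cv j) C = 1 by rewrite hdistC.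
    have hcC := hcvC _ Hj'.
    have hCc : (C == cv j) = false by rewrite eq_sym.
    have hbB' := hbB j. have hBb : (B == beta j) = false by rewrite eq_sym.
    rewrite /is_uv_path /Pm.
    case: (hbeta _ Hj') => [E|[_ Hb1]].
      rewrite E eqxx /= !rcons_cat /=; rewrite E in hbB' hBb; apply/andP; split.
        steps; apply: (seg_path (f := fun W => V A W (cv j) l1)); [exact: hrel_adj| exact: walk_path|].
        by rewrite walk_last /=; steps.
      do 3 (usimp; rewrite ?hcC ?hCc ?hbB' ?hBb ?hBB ?hB'B ?(map_inj_uniq (finj _ _ _))).
      ufin.
    have hbB'' : (beta j == B') = false by apply/negbTE; apply: hdist1_neq.
    have hB'b : (B' == beta j) = false by rewrite eq_sym.
    rewrite hbB'' /= !rcons_cat /=; apply/andP; split.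
      steps; apply: (seg_path (f := fun W => V A W (cv j) l1)); [exact: hrel_adj| exact: walk_path|].
      by rewrite walk_last /=; steps.
    do 3 (usimp; rewrite ?hcC ?hCc ?hbB' ?hBb ?hBB ?hB'B ?hbB'' ?hB'b ?(map_inj_uniq (finj _ _ _))).
    ufin.
- move=> [[|[|j]] Hj] //; rewrite /P /=.
  apply/eqP => E; have : V A B C l1 \in Pa by rewrite /Pa mem_mapB mem_rev hBq2 !eqxx.
  by rewrite E.
- move=> [[|[|j]] Hj] x; rewrite /P /=.
  + move/mapP => [W HW ->]; rewrite /cls /vA /vB /vC /vd /V /= ?l12 ?eqxx /= ?eqxx /=.
    by rewrite -mem_rev HW.
  + rewrite /Pb !mem_cat => /orP[|/orP[]].
    * by rewrite !inE => /or3P[]/eqP->; rewrite /cls /vA /vB /vC /vd /V /= ?eqxx ?haxA.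
    * move/mapP => [W HW ->]; rewrite /cls /vA /vB /vC /vd /V /=.
      by rewrite haxA.
    * by rewrite !inE => /orP[]/eqP->; rewrite /cls /vA /vB /vC /vd /V /= ?eqxx ?haxA.
  + have Hj' : j < 2 * r by move: Hj; rewrite addn2 !ltnS.
    rewrite ?subSS ?subn0.
    have hcC := hcvC _ Hj'.
    rewrite /Pm !mem_cat => /orP[|/orP[|/orP[]]].
    * by rewrite !inE => /orP[]/eqP->; rewrite /cls /vA /vB /vC /vd /V /= ?eqxx ?l02 ?l12 /= hcC /=;
        apply: pick_idx.
    * by move/mapP => [W HW ->]; rewrite /cls /vA /vB /vC /vd /V /= ?eqxx ?l12 /= hcC /=; apply: pick_idx.
    * rewrite !inE => /orP[]/eqP->; rewrite /cls /vA /vB /vC /vd /V /= ?eqxx ?l02 ?l12 /= ?hcC /=.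
        by apply: pick_idx.
      by rewrite ?l01 /=; apply: pick_idx.
    * case: ifP => // Hb; rewrite inE => /eqP->; rewrite /cls /vA /vB /vC /vd /V /= ?eqxx ?l12 /=.
      case: (hbeta _ Hj') => [E|[Hq _]]; first by rewrite E eqxx in Hb.
      by rewrite (negbTE Hq) /=; apply: pick_idx.
- move=> [[|[|j]] Hj]; rewrite /P /= /path_length.
  + rewrite /Pa size_map size_rev hq2size; have := hdist_le B' B.
    exact: ar1.
  + rewrite /Pb !size_cat size_map walk_size; have := hdist_le B B'.
    exact: ar2.
  + rewrite ?subSS ?subn0 /Pm !size_cat size_map walk_size.
    apply: ar3; first exact: hdist_le.
    by case: ifP.
Qed.

End C01.


Section C21.
Variables r s t : nat.
Hypotheses (hr : 1 <= r) (hrs : r <= s) (hst : s <= t).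

Lemma case21 (A : word r) (B B' : word s) (C : word t) : B != B' ->
  good (V A B C l2) (V A B' C l1) (s + 6).
Proof.
move=> nBB.
have hj : forall j, j < 2 * r -> j./2 < r by move=> j; rewrite ltn_half_double -mul2n.
have hjs : forall j, j < 2 * r -> j./2 < s by move=> j /hj H; apply: leq_trans H hrs.
have h0t : 0./2 < t by apply: leq_trans hr (leq_trans hrs hst).
set q2 := walk B' B.
set beta := fun j => if var B' j \in q2 then B' else var B' j.
set cx := var C 0.
set av := fun j => var A j.
have hcx : hdist C cx = 1 by apply: var_hdist.
have hcx' : hdist cx C = 1 by rewrite hdistC.
have hav : forall j, j < 2 * r -> hdist A (av j) = 1 by move=> j /hj; apply: var_hdist.
have havinj : forall a b, a < 2 * r -> b < 2 * r -> av a = av b -> a = b.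
  by move=> a b /hj Ha /hj Hb; apply: var_inj.
have hBq2 : B \in q2 by apply: walk_mem_last; rewrite eq_sym.
have hbB : forall j, (beta j == B) = false.
  move=> j; rewrite /beta; case: ifP => H; first by rewrite eq_sym (negbTE nBB).
  by apply/negbTE; apply/negP => /eqP E; rewrite E hBq2 in H.
have hbeta : forall j, j < 2 * r -> beta j = B' \/ (beta j \notin q2 /\ hdist (beta j) B' = 1).
  move=> j Hj; rewrite /beta; case: ifP => H; [by left | right].
  by rewrite H hdistC var_hdist //; apply: hjs.
have hbinj : forall a b, a < 2 * r -> b < 2 * r -> beta a = beta b -> a = b.
  move=> a b Ha Hb; rewrite /beta.
  have Hva := var_neq B' (hjs _ Ha); have Hvb := var_neq B' (hjs _ Hb).
  case: ifP => Ia; case: ifP => Ib.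
  - move=> _; apply: (var_inj (hjs _ Ha) (hjs _ Hb)).
    by apply: (walk_one Ia Ib); apply: var_hdist; apply: hjs.
  - by move=> E; move: Hvb; rewrite -E eqxx.
  - by move=> E; move: Hva; rewrite E eqxx.
  - by apply: var_inj; apply: hjs.
have hCcx : (C == cx) = false by apply/negbTE; rewrite eq_sym; apply: var_neq.
have hcxC : (cx == C) = false by rewrite eq_sym.
have havA : forall j, j < 2 * r -> (av j == A) = false.
  by move=> j Hj; apply/negbTE; apply: var_neq; apply: hj.
have hq2last : last B' q2 = B by exact: walk_last.
have hq2path : path (@hrel s) B' q2 by exact: walk_path.
have hq2uniq : uniq (B' :: q2) by exact: walk_uniq.
have hq2size : size q2 = hdist B' B by exact: walk_size.
clearbody q2 beta cx av.
pose Pa := map (fun W => V A W C l1) (rev q2).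
pose Pb := [:: V A B C l0; V A B cx l0; V A B cx l1] ++
  map (fun W => V A W cx l1) (walk B B') ++ [:: V A B' cx l0; V A B' C l0].
pose Pm j := [:: V (av j) B C l2; V (av j) B C l1] ++
  map (fun W => V (av j) W C l1) (walk B (beta j)) ++
  [:: V (av j) (beta j) C l2; V A (beta j) C l2] ++
  (if beta j == B' then [::] else [:: V A (beta j) C l1]).
pose P (i : 'I_(2 * r + 2)) := if val i == 0 then Pa else if val i == 1 then Pb else Pm (val i - 2).
pose cls (x : e3c_vertex r s t) :=
  if (vd x == l0) || (vC x != C) then 1
  else if vA x != A then
    (if [pick k : 'I_(2 * r) | av k == vA x] is Some k then (val k).+2 else 0)
  else if (vd x == l1) && (vB x \in q2) then 0
  else (if [pick k : 'I_(2 * r) | beta k == vB x] is Some k then (val k).+2 else 0).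
have finj : forall A0 C0 d0, injective (fun W : word s => @V r s t A0 W C0 d0).
  by move=> A0 C0 d0 a b /eqP; rewrite V_eq => /and4P[_ /eqP].
have hBB : (B == B') = false by apply/negbTE.
have hB'B : (B' == B) = false by rewrite eq_sym.
apply: (@assemble _ _ _ _ _ _ P cls).
- move=> [[|[|j]] Hj]; rewrite /P /=.
  + rewrite /is_uv_path /Pa -map_rcons -rev_cons; apply/andP; split; last first.
      rewrite cons_uniq mem_mapB l21 !andbF /= (map_inj_uniq (finj _ _ _)) rev_uniq.
      exact: hq2uniq.
    rewrite (lastI B' q2) rev_rcons hq2last /= adjE0 //=.
    rewrite (@path_map _ _ (fun W => V A W C l1)) -{1}hq2last rev_path.
    by apply: sub_path hq2path => a b /(hrel_adj A C) H /=; rewrite adjC.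
  + rewrite /is_uv_path /Pb rcons_cat /=; apply/andP; split.
      steps; rewrite rcons_cat; apply: (seg_path (f := fun W => V A W cx l1)).
      * exact: hrel_adj.
      * exact: walk_path.
      * by rewrite walk_last /=; steps.
    rewrite /= !rcons_cat /=.
    do 3 (usimp; rewrite ?hCcx ?hcxC ?hBB ?hB'B ?(map_inj_uniq (finj _ _ _))).
    ufin.
  + have Hj' : j < 2 * r by move: Hj; rewrite addn2 !ltnS.
    rewrite ?subSS ?subn0.
    have h1 := hav _ Hj'. have h1' : hdist (av j) A = 1 by rewrite hdistC.
    have hcC := havA _ Hj'.
    have hCc : (A == av j) = false by rewrite eq_sym.
    have hbB' := hbB j. have hBb : (B == beta j) = false by rewrite eq_sym.
    rewrite /is_uv_path /Pm.
    case: (hbeta _ Hj') => [E|[_ Hb1]].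
      rewrite E eqxx /= !rcons_cat /=; rewrite E in hbB' hBb; apply/andP; split.
        steps; apply: (seg_path (f := fun W => V (av j) W C l1)); [exact: hrel_adj| exact: walk_path|].
        by rewrite walk_last /=; steps.
      do 3 (usimp; rewrite ?hcC ?hCc ?hbB' ?hBb ?hBB ?hB'B ?(map_inj_uniq (finj _ _ _))).
      ufin.
    have hbB'' : (beta j == B') = false by apply/negbTE; apply: hdist1_neq.
    have hB'b : (B' == beta j) = false by rewrite eq_sym.
    rewrite hbB'' /= !rcons_cat /=; apply/andP; split.
      steps; apply: (seg_path (f := fun W => V (av j) W C l1)); [exact: hrel_adj| exact: walk_path|].
      by rewrite walk_last /=; steps.
    do 3 (usimp; rewrite ?hcC ?hCc ?hbB' ?hBb ?hBB ?hB'B ?hbB'' ?hB'b ?(map_inj_uniq (finj _ _ _))).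
    ufin.
- move=> [[|[|j]] Hj] //; rewrite /P /=.
  apply/eqP => E; have : V A B C l1 \in Pa by rewrite /Pa mem_mapB mem_rev hBq2 !eqxx.
  by rewrite E.
- move=> [[|[|j]] Hj] x; rewrite /P /=.
  + move/mapP => [W HW ->]; rewrite /cls /vA /vB /vC /vd /V /= ?l10 ?eqxx /= ?eqxx /=.
    by rewrite -mem_rev HW.
  + rewrite /Pb !mem_cat => /orP[|/orP[]].
    * by rewrite !inE => /or3P[]/eqP->; rewrite /cls /vA /vB /vC /vd /V /= ?eqxx ?hcxC ?orbT.
    * move/mapP => [W HW ->]; rewrite /cls /vA /vB /vC /vd /V /=.
      by rewrite hcxC ?orbT.
    * by rewrite !inE => /orP[]/eqP->; rewrite /cls /vA /vB /vC /vd /V /= ?eqxx ?hcxC ?orbT.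
  + have Hj' : j < 2 * r by move: Hj; rewrite addn2 !ltnS.
    rewrite ?subSS ?subn0.
    have hcC := havA _ Hj'.
    rewrite /Pm !mem_cat => /orP[|/orP[|/orP[]]].
    * by rewrite !inE => /orP[]/eqP->; rewrite /cls /vA /vB /vC /vd /V /= ?eqxx ?l20 ?l10 /= hcC /=;
        apply: pick_idx.
    * by move/mapP => [W HW ->]; rewrite /cls /vA /vB /vC /vd /V /= ?eqxx ?l10 /= hcC /=; apply: pick_idx.
    * rewrite !inE => /orP[]/eqP->; rewrite /cls /vA /vB /vC /vd /V /= ?eqxx ?l20 ?l10 /= ?hcC /=.
        by apply: pick_idx.
      by rewrite ?l21 /=; apply: pick_idx.
    * case: ifP => // Hb; rewrite inE => /eqP->; rewrite /cls /vA /vB /vC /vd /V /= ?eqxx ?l10 /=.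
      case: (hbeta _ Hj') => [E|[Hq _]]; first by rewrite E eqxx in Hb.
      by rewrite (negbTE Hq) /=; apply: pick_idx.
- move=> [[|[|j]] Hj]; rewrite /P /= /path_length.
  + rewrite /Pa size_map size_rev hq2size; have := hdist_le B' B.
    exact: ar1.
  + rewrite /Pb !size_cat size_map walk_size; have := hdist_le B B'.
    exact: ar2.
  + rewrite ?subSS ?subn0 /Pm !size_cat size_map walk_size.
    apply: ar3; first exact: hdist_le.
    by case: ifP.
Qed.

End C21.


Lemma pick_idxg (T : eqType) m (f : nat -> T) (g : nat -> nat) x j :
  (forall a b, a < m -> b < m -> f a = f b -> a = b) -> j < m -> x = f j ->
  (if [pick k : 'I_m | f k == x] is Some k then g (val k) else 0) = g j.
Proof.
move=> Hinj Hj ->; case: pickP => [k /eqP Hk|H]; first by congr g; exact: Hinj _ _ (ltn_ord k) Hj Hk.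
by move: (H (Ordinal Hj)); rewrite /= eqxx.
Qed.

Lemma ar4 k s : k <= s -> (k.+1 < s + 8). Proof. lia. Qed.
Lemma ar5 k s : k <= s -> 2 + (k + 2) < s + 8. Proof. lia. Qed.
Lemma ar6 k s : k <= s -> 2 + (k + 1).+1 < s + 8. Proof. lia. Qed.
Lemma ar7 k s : k <= s -> 5 + (k + 1).+1 < s + 8. Proof. lia. Qed.

Section C02.
Variables r s t : nat.
Hypotheses (hr : 1 <= r) (hrs : r <= s) (hst : s <= t).

Lemma case02 (A : word r) (B B' : word s) (C : word t) : B != B' ->
  good (V A B C l0) (V A B' C l2) (s + 8).
Proof.
move=> nBB.
have hj : forall j, j < 2 * r -> j./2 < r by move=> j; rewrite ltn_half_double -mul2n.
have hjs : forall j, j < 2 * r -> j./2 < s by move=> j /hj H; apply: leq_trans H hrs.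
have hjt : forall j, j < 2 * r -> j./2 < t by move=> j /hjs H; apply: leq_trans H hst.
have h0 : 0 < 2 * r by rewrite muln_gt0.
set q := walk B B'.
set av := fun j => var A j.
set cv := fun j => var C j.
have hav : forall j, j < 2 * r -> hdist A (av j) = 1 by move=> j /hj; apply: var_hdist.
have havinj : forall a b, a < 2 * r -> b < 2 * r -> av a = av b -> a = b.
  by move=> a b /hj Ha /hj Hb; apply: var_inj.
have hcv : forall j, j < 2 * r -> hdist C (cv j) = 1 by move=> j /hjt; apply: var_hdist.
have hcvinj : forall a b, a < 2 * r -> b < 2 * r -> cv a = cv b -> a = b.
  by move=> a b /hjt Ha /hjt Hb; apply: var_inj.
have havA : forall j, j < 2 * r -> (av j == A) = false.
  by move=> j Hj; apply/negbTE; apply: var_neq; apply: hj.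
have hcvC : forall j, j < 2 * r -> (cv j == C) = false.
  by move=> j Hj; apply/negbTE; apply: var_neq; apply: hjt.
have hqlast : last B q = B' by exact: walk_last.
have hqpath : path (@hrel s) B q by exact: walk_path.
have hquniq : uniq q by exact: walk_uniq'.
have hqB : (B \in q) = false by exact: walk_nstart.
have hqsize : size q = hdist B B' by exact: walk_size.
have hqB' : B' \in q by exact: walk_mem_last.
clearbody q av cv.
pose P0 := V A B C l1 :: map (fun W => V A W C l1) q.
pose P1 := [:: V A B (cv 0) l0; V A B (cv 0) l1] ++ map (fun W => V A W (cv 0) l1) q ++
  [:: V A B' (cv 0) l0; V A B' C l0].
pose Pm j := (if j is 0 then [:: V A B C l2; V (av 0) B C l2] else
    [:: V A B (cv j) l0; V A B (cv j) l2; V (av j) B (cv j) l2; V (av j) B (cv j) l0; V (av j) B C l0])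
  ++ V (av j) B C l1 :: map (fun W => V (av j) W C l1) q ++ [:: V (av j) B' C l2].
pose P (i : 'I_(2 * r + 2)) := if val i == 0 then P0 else if val i == 1 then P1 else Pm (val i - 2).
pose cls (x : e3c_vertex r s t) :=
  if vA x != A then
    (if [pick k : 'I_(2 * r) | av k == vA x] is Some k then (val k).+2 else 0)
  else if vC x != C then
    (if [pick k : 'I_(2 * r) | cv k == vC x] is Some k then
       (if val k == 0 then 1 else (val k).+2) else 0)
  else if vd x == l1 then 0 else if vd x == l0 then 1 else 2.
have finj : forall A0 C0 d0, injective (fun W : word s => @V r s t A0 W C0 d0).
  by move=> A0 C0 d0 a b /eqP; rewrite V_eq => /and4P[_ /eqP].
have hBB : (B == B') = false by apply/negbTE.
have hB'B : (B' == B) = false by rewrite eq_sym.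
apply: (@assemble _ _ _ _ _ _ P cls).
- move=> [[|[|j]] Hj]; rewrite /P /=.
  + rewrite /is_uv_path /P0 /=; apply/andP; split.
      steps; rewrite -cats1; apply: (seg_path (f := fun W => V A W C l1));
        [exact: hrel_adj | exact: hqpath | by rewrite hqlast /=; steps].
    rewrite -cats1.
    do 3 (usimp; rewrite ?hBB ?hB'B ?hqB ?(map_inj_uniq (finj _ _ _))).
    ufin.
  + have h1 := hcv _ h0. have h1' : hdist (cv 0) C = 1 by rewrite hdistC.
    have hcC := hcvC _ h0. have hCc : (C == cv 0) = false by rewrite eq_sym.
    rewrite /is_uv_path /P1 /= ?rcons_cat /=; apply/andP; split.
      steps; rewrite ?rcons_cat; apply: (seg_path (f := fun W => V A W (cv 0) l1));
        [exact: hrel_adj | exact: hqpath | by rewrite hqlast /=; steps].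
    do 3 (usimp; rewrite ?hcC ?hCc ?hBB ?hB'B ?hqB ?hqB' ?(map_inj_uniq (finj _ _ _))).
    ufin.
  + have Hj' : j < 2 * r by move: Hj; rewrite addn2 !ltnS.
    rewrite ?subSS ?subn0.
    have h1 := hav _ Hj'. have h1' : hdist (av j) A = 1 by rewrite hdistC.
    have haA := havA _ Hj'. have hAa : (A == av j) = false by rewrite eq_sym.
    have h2 := hcv _ Hj'. have h2' : hdist (cv j) C = 1 by rewrite hdistC.
    have hcC := hcvC _ Hj'. have hCc : (C == cv j) = false by rewrite eq_sym.
    rewrite /is_uv_path /Pm; case: j Hj Hj' h1 h1' haA hAa h2 h2' hcC hCc => [|j] Hj Hj' h1 h1' haA hAa h2 h2' hcC hCc;
      rewrite /= ?rcons_cat /=; apply/andP; split.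
    * steps; rewrite ?rcons_cat; apply: (seg_path (f := fun W => V (av 0) W C l1));
        [exact: hrel_adj | exact: hqpath | by rewrite hqlast /=; steps].
    * do 3 (usimp; rewrite ?haA ?hAa ?hBB ?hB'B ?hqB ?hqB' ?(map_inj_uniq (finj _ _ _))).
      ufin.
    * steps; rewrite ?rcons_cat; apply: (seg_path (f := fun W => V (av j.+1) W C l1));
        [exact: hrel_adj | exact: hqpath | by rewrite hqlast /=; steps].
    * do 3 (usimp; rewrite ?haA ?hAa ?hcC ?hCc ?hBB ?hB'B ?hqB ?hqB' ?(map_inj_uniq (finj _ _ _))).
      ufin.
- move=> [[|[|j]] Hj] //; rewrite /P /Pm /= ?subSS ?subn0; by case: j Hj.
- move=> [[|[|j]] Hj] x; rewrite /P /=.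
  + rewrite /P0 inE => /orP[/eqP->|/mapP [W HW ->]];
      by rewrite /cls /vA /vB /vC /vd /V /= ?eqxx.
  + have hcC := hcvC _ h0.
    rewrite /P1 !mem_cat => /orP[|/orP[]].
    * by rewrite !inE => /orP[]/eqP->; rewrite /cls /vA /vB /vC /vd /V /= ?eqxx hcC /=;
        apply: (@pick_idxg _ _ _ (fun k => if k == 0 then 1 else k.+2) _ 0).
    * by move/mapP => [W HW ->]; rewrite /cls /vA /vB /vC /vd /V /= ?eqxx hcC /=;
        apply: (@pick_idxg _ _ _ (fun k => if k == 0 then 1 else k.+2) _ 0).
    * rewrite !inE => /orP[]/eqP->; rewrite /cls /vA /vB /vC /vd /V /= ?eqxx ?hcC /=.
        by apply: (@pick_idxg _ _ _ (fun k => if k == 0 then 1 else k.+2) _ 0).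
      by [].
  + have Hj' : j < 2 * r by move: Hj; rewrite addn2 !ltnS.
    rewrite ?subSS ?subn0.
    have haA := havA _ Hj'. have hcC := hcvC _ Hj'.
    rewrite /Pm mem_cat; case: j Hj Hj' haA hcC => [|j] Hj Hj' haA hcC.
    * rewrite !inE => /orP[/orP[]/eqP->|/orP[/eqP->|]].
      - by rewrite /cls /vA /vB /vC /vd /V /= ?eqxx.
      - by rewrite /cls /vA /vB /vC /vd /V /= haA /=; apply: pick_idx.
      - by rewrite /cls /vA /vB /vC /vd /V /= haA /=; apply: pick_idx.
      rewrite mem_cat => /orP[/mapP [W HW ->]|]; last rewrite inE => /eqP->.
      - by rewrite /cls /vA /vB /vC /vd /V /= haA /=; apply: pick_idx.
      - by rewrite /cls /vA /vB /vC /vd /V /= haA /=; apply: pick_idx.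
    * rewrite !inE => /orP[/or4P[|||/orP[]]/eqP->|/orP[/eqP->|]].
      - by rewrite /cls /vA /vB /vC /vd /V /= ?eqxx hcC /=;
          apply: (@pick_idxg _ _ _ (fun k => if k == 0 then 1 else k.+2) _ j.+1).
      - by rewrite /cls /vA /vB /vC /vd /V /= ?eqxx hcC /=;
          apply: (@pick_idxg _ _ _ (fun k => if k == 0 then 1 else k.+2) _ j.+1).
      - by rewrite /cls /vA /vB /vC /vd /V /= haA /=; apply: pick_idx.
      - by rewrite /cls /vA /vB /vC /vd /V /= haA /=; apply: pick_idx.
      - by rewrite /cls /vA /vB /vC /vd /V /= haA /=; apply: pick_idx.
      - by rewrite /cls /vA /vB /vC /vd /V /= haA /=; apply: pick_idx.
      rewrite mem_cat => /orP[/mapP [W HW ->]|]; last rewrite inE => /eqP->.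
      - by rewrite /cls /vA /vB /vC /vd /V /= haA /=; apply: pick_idx.
      - by rewrite /cls /vA /vB /vC /vd /V /= haA /=; apply: pick_idx.
- move=> [[|[|j]] Hj]; rewrite /P /= /path_length.
  + rewrite /P0 /= size_map hqsize; apply: ar4; exact: hdist_le.
  + rewrite /P1 !size_cat size_map hqsize /=; apply: ar5; exact: hdist_le.
  + rewrite ?subSS ?subn0 /Pm !size_cat /= size_cat size_map hqsize. case: (j) => [|j'] /=.
      apply: ar6; exact: hdist_le.
    apply: ar7; exact: hdist_le.
Qed.

End C02.


Lemma ord3 (d : 'I_3) : d = l0 \/ d = l1 \/ d = l2.
Proof.
case: d => [[|[|[|m]]] H] //.
- by left; apply: val_inj.
- by right; left; apply: val_inj.
- by right; right; apply: val_inj.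
Qed.

Theorem lemma16 (r s t : nat) (hr : 1 <= r) (hrs : r <= s) (hst : s <= t)
    (u v : e3c_vertex r s t) :
  vA u = vA v -> vB u <> vB v -> vC u = vC v -> vd u <> vd v ->
  exists P : 'I_(2 * r + 2) -> seq (e3c_vertex r s t),
    (forall i, is_uv_path u v (P i)) /\
    injective P /\
    (forall i j, i <> j -> forall x, x \in P i -> x \notin P j) /\
    (forall i,
       let b := if ((vd u == 0 :> nat) && (vd v == 2 :> nat))
                   || ((vd u == 2 :> nat) && (vd v == 0 :> nat))
                then s + 8 else s + 6 in
       path_length (P i) <= b).
Proof.
case: u => [[[A B] C] d]; case: v => [[[A' B'] C'] d'].
rewrite /vA /vB /vC /vd /= => eA nB eC nd; subst A' C'.
have nBB : B != B' by apply/eqP.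
have nB'B : B' != B by rewrite eq_sym.
suff H : good (V A B C d) (V A B' C d')
  (if ((d == 0 :> nat) && (d' == 2 :> nat)) || ((d == 2 :> nat) && (d' == 0 :> nat))
   then s + 8 else s + 6) by exact: H.
case: (ord3 d) nd => [->|[->|->]] nd; case: (ord3 d') nd => [->|[->|->]] nd; try by case: nd.
- exact: case01.
- exact: case02.
- by apply: good_rev; apply: case01.
- by apply: good_rev; apply: case21.
- by apply: good_rev; apply: case02.
- exact: case21.
Qed.
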